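(* Let $f:\mathbb{R}^n\to\mathbb{R}$ be convex and differentiable with $\nabla f$ $L$-Lipschitz continuous. Let $w^t\in\Delta^n$ and let $$w^{t+1}=w^t-\eta_t\,w^t\odot\Pi^t\nabla f^t$$ with $0<\eta_t\le\min\{1/L,\eta_{t,\max}\}$. Then $$f(w^{t+1})\le f(w^t)-\frac{\eta_t}{2}\operatorname{Var}[\nabla f^t\,|\,w^t].$$
   Context: $\Delta^n=\{w\in\mathbb{R}^n : \sum_i w_i=1,\ w_i\ge 0\}$. Write $\nabla f^t=\nabla f(w^t)$ and $(\Pi^t\nabla f^t)_i=\nabla_i f(w^t)-w^t\cdot\nabla f(w^t)$; $\odot$ is componentwise multiplication. $\eta_{t,\max}=1/\max_i(\nabla_i f(w^t)-w^t\cdot\nabla f(w^t))$, and $\operatorname{Var}[\nabla f^t\,|\,w^t]=\sum_i w^t_i\big(\nabla_i f(w^t)-w^t\cdot\nabla f(w^t)\big)^2$. *)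

(* Defs.v *)
From HB Require Import structures.
From mathcomp Require Import all_boot all_order all_algebra.
From mathcomp Require Import all_classical all_reals all_analysis.
Set Implicit Arguments. Unset Strict Implicit. Unset Printing Implicit Defensive.
Import Order.TTheory GRing.Theory Num.Theory.
Import numFieldNormedType.Exports.
Local Open Scope ring_scope.

Definition simplex (R : realType) (n : nat) (w : 'rV[R]_n) : Prop :=
  (\sum_i w 0 i = 1) /\ (forall i, 0 <= w 0 i).

Definition dotv (R : realType) (n : nat) (u v : 'rV[R]_n) : R :=
  \sum_i u 0 i * v 0 i.
Definition enorm (R : realType) (n : nat) (v : 'rV[R]_n) : R :=
  Num.sqrt (dotv v v).

Definition grad (R : realType) (n : nat) (f : 'rV[R]_n -> R) (x : 'rV[R]_n)
  : 'rV[R]_n := \row_i ('d f x (delta_mx 0 i : 'rV[R]_n)).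

Definition convex_fun (R : realType) (n : nat) (f : 'rV[R]_n -> R) : Prop :=
  forall (x y : 'rV[R]_n) (t : R), 0 <= t -> t <= 1 ->
    f (t *: x + (1 - t) *: y) <= t * f x + (1 - t) * f y.

Definition proj_grad (R : realType) (n : nat) (f : 'rV[R]_n -> R)
  (w : 'rV[R]_n) : 'rV[R]_n :=
  \row_i (grad f w 0 i - dotv w (grad f w)).

Definition var_grad (R : realType) (n : nat) (f : 'rV[R]_n -> R)
  (w : 'rV[R]_n) : R :=
  \sum_i w 0 i * (proj_grad f w 0 i) ^+ 2.

Definition md_step (R : realType) (n : nat) (f : 'rV[R]_n -> R)
  (eta : R) (w : 'rV[R]_n) : 'rV[R]_n :=
  \row_i (w 0 i - eta * (w 0 i * proj_grad f w 0 i)).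

(* Main.v *)
Require Import Defs.
From HB Require Import structures.
From mathcomp Require Import all_boot all_order all_algebra.
From mathcomp Require Import all_classical all_reals all_analysis.
From mathcomp Require Import ring lra.
Import Order.TTheory GRing.Theory Num.Theory.
Import numFieldNormedType.Exports.
Local Open Scope ring_scope.
Local Open Scope classical_set_scope.

Lemma dgrad (R : realType) (n : nat) (f : 'rV[R]_n -> R) p d :
  'd f p d = dotv (grad f p) d.
Proof.
rewrite {1}(row_sum_delta d) linear_sum /dotv; apply: eq_bigr => i _.
by rewrite linearZ /= mxE mulrC.
Qed.

Lemma gderiv (R : realType) (n : nat) (f : 'rV[R]_n -> R) (x d : 'rV[R]_n) (t : R) :
  (forall x, differentiable f x) ->
  is_derive t 1 (fun s : R => f (s *: d + x)) (dotv (grad f (t *: d + x)) d).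
Proof.
move=> df.
have dh : differentiable (fun s : R => s *: d + x) t.
  by apply: differentiableD => //; exact: differentiable_cst.
have dg : differentiable ((f : _ -> R) \o (fun s : R => s *: d + x)) t.
  exact: differentiable_comp.
have := derivableP ((@diff_derivable _ _ _ _ _ (1:R) dg)).
rewrite deriveE // diff_comp //= -dgrad.
suff -> : 'd (fun s : R => s *: d + x) t 1 = d by [].
rewrite diffD //.

have e1 : ('d (fun=> x) t : R -> 'rV[R]_n) 1 = 0.
  by have := congr1 (fun g => g (1:R)) (@diff_cst R _ _ x t).
have e2 : ('d ( *:%R^~ d) t : R -> 'rV[R]_n) 1 = d.
  by rewrite (@diff_val _ _ _ _ _ _ _ (is_diff_scalel t d)) scale1r.
cbv beta.
rewrite -[d in RHS]addr0; congr (_ + _).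
  by rewrite (@diff_val _ _ _ _ _ _ _ (is_diff_scalel t d)) scale1r.
by rewrite diff_cst.
Qed.

Lemma cs_bound (R : realType) (n : nat) (u d : 'rV[R]_n) (a : R) :
  0 < a -> enorm u <= a * enorm d -> dotv u d <= a * dotv d d.
Proof.
move=> a0 h.
have uu0 : 0 <= dotv u u by apply: sumr_ge0 => i _; rewrite -expr2 sqr_ge0.
have dd0 : 0 <= dotv d d by apply: sumr_ge0 => i _; rewrite -expr2 sqr_ge0.
have h2 : dotv u u <= a ^+ 2 * dotv d d.
  move: h; rewrite /enorm => h.
  have s1 := sqrtr_ge0 (dotv u u); have s2 := sqrtr_ge0 (dotv d d).
  have e1 := sqr_sqrtr uu0; have e2 := sqr_sqrtr dd0.
  rewrite -e1 -e2; nra.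
have h3 : 2 * a * dotv u d <= dotv u u + a ^+ 2 * dotv d d.
  rewrite /dotv !mulr_sumr -big_split /=.
  apply: ler_sum => i _.
  have := sqr_ge0 (u 0 i - a * d 0 i).
  by move=> H; nra.
nra.
Qed.

Lemma enormZ (R : realType) (n : nat) (d : 'rV[R]_n) (c : R) :
  0 <= c -> enorm (c *: d) = c * enorm d.
Proof.
move=> c0; rewrite /enorm.
have -> : dotv (c *: d) (c *: d) = c ^+ 2 * dotv d d.
  rewrite /dotv mulr_sumr; apply: eq_bigr => i _; rewrite !mxE; ring.
by rewrite sqrtrM ?sqr_ge0 // sqrtr_sqr ger0_norm.
Qed.

Lemma scR (R : realType) (k l : R) :  k *: l = k * l.
Proof. by []. Qed.

Lemma dotvBl (R : realType) (n : nat) (u v d : 'rV[R]_n) :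
  dotv (u - v) d = dotv u d - dotv v d.
Proof.
by rewrite /dotv -sumrB; apply: eq_bigr => i _; rewrite !mxE mulrBl.
Qed.

Lemma descent (R : realType) (n : nat) (f : 'rV[R]_n -> R) (L : R)
  (x d : 'rV[R]_n) :
  (forall x, differentiable f x) -> 0 < L ->
  (forall x y, enorm (grad f x - grad f y) <= L * enorm (x - y)) ->
  f (d + x) <= f x + dotv (grad f x) d + L / 2 * dotv d d.
Proof.
move=> df L0 Lip.
set c0 := dotv (grad f x) d.
set K := L / 2 * dotv d d.
pose g := fun s : R => f (s *: d + x).
pose phi : R -> R := g - (c0 \*: (@id R)) - (K \*: ((@id R) ^+ 2)).
have Hd : forall s : R, is_derive s 1 phi (dotv (grad f (s *: d + x)) d - c0 *: 1 - K *: ((2%:R * s ^+ 1) *: 1)).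
  move=> s; apply: is_deriveB; first apply: is_deriveB.
  exact: gderiv.
have cont : {within `[0, 1], continuous phi}.
  apply: continuous_subspaceT => s.
  have [dd _] := Hd s.
  exact/differentiable_continuous/derivable1_diffP.
have [c /andP[c0p c1] Hc] := MVT ltr01 (fun s _ => Hd s) cont.
have Hc' : phi 1 - phi 0 <= 0.
  rewrite Hc subr0 mulr1 !scR mulr1 expr1.
  move: c0p c1; rewrite !bnd_simp => c0p c1.
  have hb : enorm (grad f (c *: d + x) - grad f x) <= (L * c) * enorm d.
    by have := Lip (c *: d + x) x; rewrite addrK (@enormZ _ _ d c (ltW c0p)) mulrA.
  have H : dotv (grad f (c *: d + x)) d - c0 <= L * c * dotv d d.
    by rewrite /c0 -dotvBl; apply: (@cs_bound _ _ _ _ _ (mulr_gt0 L0 c0p) hb).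
  have -> : K * (2 * c * 1) = L * c * dotv d d.
    by rewrite /K; move: (dotv d d) => D; field.
  move: H; move: (dotv (grad f (c *: d + x)) d) (L * c * dotv d d) => A B; lra.
have ev : forall t, phi t = f (t *: d + x) - c0 * t - K * (t * t) by [].
move: Hc'; rewrite !ev scale0r scale1r add0r.
move: (f (d + x)) (f x) => A B; lra.
Qed.

Theorem theoremA2 (R : realType) (n : nat) (f : 'rV[R]_n -> R) (L eta : R)
  (w : 'rV[R]_n) :
  convex_fun f ->
  (forall x, differentiable f x) ->
  0 < L ->
  (forall x y, enorm (grad f x - grad f y) <= L * enorm (x - y)) ->
  simplex w ->
  0 < eta ->
  eta <= L^-1 ->
  (forall i, eta * proj_grad f w 0 i <= 1) ->
  f (md_step f eta w) <= f w - eta / 2 * var_grad f w.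
Proof.
move=> _ df L0 Lip [sw w0] eta0 etaL _.
pose d : 'rV[R]_n := \row_i (- eta * (w 0 i * proj_grad f w 0 i)).
have -> : md_step f eta w = d + w.
  by apply/rowP => i; rewrite !mxE; ring.
apply: le_trans (@descent _ _ f L w d df L0 Lip) _.
have pE : forall i, proj_grad f w 0 i = grad f w 0 i - dotv w (grad f w).
  by move=> i; rewrite mxE.
have w1 : forall i, w 0 i <= 1.
  move=> i; rewrite -sw (bigD1 i) //= lerDl; apply: sumr_ge0 => j _; exact: w0.
have sp0 : \sum_i w 0 i * proj_grad f w 0 i = 0.
  under eq_bigr => i _ do rewrite pE mulrBr.
  by rewrite sumrB -mulr_suml sw mul1r subrr.
have E1 : dotv (grad f w) d = - eta * var_grad f w.
  apply/eqP; rewrite -subr_eq0; apply/eqP.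
  rewrite /dotv /var_grad mulr_sumr -sumrB.
  transitivity (- eta * dotv w (grad f w) * \sum_i w 0 i * proj_grad f w 0 i); last first.
    by rewrite sp0 mulr0.
  rewrite mulr_sumr; apply: eq_bigr => i _; rewrite !mxE ?pE; ring.
have dE : forall i, d 0 i = - eta * (w 0 i * proj_grad f w 0 i).
  by move=> i; rewrite /d mxE.
have E2 : dotv d d <= eta ^+ 2 * var_grad f w.
  rewrite /dotv /var_grad mulr_sumr; apply: ler_sum => i _; rewrite !dE.
  have := w0 i; have := w1 i; have := sqr_ge0 (proj_grad f w 0 i).
  move: (w 0 i) (proj_grad f w 0 i) => a b h1 h2 h3.
  have : 0 <= a * (1 - a) * b ^+ 2 by apply: mulr_ge0 => //; apply: mulr_ge0; rewrite ?subr_ge0.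
  have : 0 < eta ^+ 2 by rewrite exprn_gt0.
  nra.
have V0 : 0 <= var_grad f w.
  by apply: sumr_ge0 => i _; rewrite mulr_ge0 ?sqr_ge0.
have Le : L * eta <= 1.
  by rewrite -(mulfV (lt0r_neq0 L0)) ler_pM2l.
rewrite E1.
move: E2 V0 Le; move: (var_grad f w) (dotv d d) (f w) => V D F h1 h2 h3.
have : 0 <= (1 - L * eta) * (eta * V) by apply: mulr_ge0; nra.
nra.
Qed.
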